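(* Let $C$ be a small category. If $f:X\to Y$ is an isomorphism in $Sd(C)$, then $X=Y$ and $f=\mathrm{id}_X$.
   Context: For $q\ge0$, $[q]=\{0<\dots<q\}$ viewed as a category. A $q$-simplex of the nerve $NC$ is a functor $X:[q]\to C$; $q_X=q$. It is non-degenerate if none of its arrows $X_{i-1}\to X_i$ is an identity. $\Delta/C$ has all simplices as objects and as morphisms $X\to Y$ the order-preserving $\xi:[q_X]\to[q_Y]$ with $Y\circ\xi=X$, written $\xi_*$. For a $q$-simplex $X$ and surjective order-preserving $s:[q+1]\to[q]$ with order-preserving right inverses $d,d'$, $d_*,d'_*:X\to X\circ s$ are elementary equivalent; $\sim$ is the smallest equivalence relation on morphisms of $\Delta/C$ compatible with composition containing these pairs; $[\Delta/C]$ is the quotient category (morphisms are classes $[\xi_*]$); $Sd(C)$ is the full subcategory of $[\Delta/C]$ on the non-degenerate simplices. *)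

(* Defs.v *)
From mathcomp Require Import all_boot.
Unset Printing Implicit Defensive.

(* A small category, single-sorted presentation: a type of objects, a type of
   arrows, domain/codomain, identities and composition ([comp g f] = g o f,
   meaningful when [cod f = dom g]). *)
Record category := Category {
  Ob : Type;
  Arr : Type;
  dom : Arr -> Ob;
  cod : Arr -> Ob;
  idA : Ob -> Arr;
  comp : Arr -> Arr -> Arr;
  dom_id : forall x, dom (idA x) = x;
  cod_id : forall x, cod (idA x) = x;
  dom_comp : forall f g, cod f = dom g -> dom (comp g f) = dom f;
  cod_comp : forall f g, cod f = dom g -> cod (comp g f) = cod g;
  comp_id_r : forall f, comp f (idA (dom f)) = f;
  comp_id_l : forall f, comp (idA (cod f)) f = f;
  comp_assoc : forall f g h, cod f = dom g -> cod g = dom h ->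
      comp h (comp g f) = comp (comp h g) f }.

Arguments dom {c} _.
Arguments cod {c} _.
Arguments idA {c} _.
Arguments comp {c} _ _.

Definition mono m n (f : 'I_m -> 'I_n) :=
  forall i j : 'I_m, (i <= j)%N -> (f i <= f j)%N.
Arguments mono {m n} f.

Section Nerve.
Variable C : category.

(* A q-simplex of the nerve: a functor [q] -> C, q = sdim. *)
Record simplex := Simplex {
  sdim : nat;
  sob : 'I_sdim.+1 -> Ob C;
  sar : forall i j : 'I_sdim.+1, (i <= j)%N -> Arr C;
  sar_dom : forall i j h, dom (sar i j h) = sob i;
  sar_cod : forall i j h, cod (sar i j h) = sob j;
  sar_id : forall (i : 'I_sdim.+1) (h : (i <= i)%N), sar i i h = idA (sob i);
  sar_comp : forall (i j k : 'I_sdim.+1) (hij : (i <= j)%N) (hjk : (j <= k)%N) (hik : (i <= k)%N),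
      sar i k hik = comp (sar j k hjk) (sar i j hij) }.

Definition precomp (X : simplex) p (xi : 'I_p.+1 -> 'I_(sdim X).+1)
  (hxi : mono xi) : simplex :=
  {| sdim := p;
     sob := fun i => sob X (xi i);
     sar := fun i j h => sar X (xi i) (xi j) (hxi i j h);
     sar_dom := fun i j h => sar_dom X _ _ _;
     sar_cod := fun i j h => sar_cod X _ _ _;
     sar_id := fun i h => sar_id X _ _;
     sar_comp := fun i j k hij hjk hik => sar_comp X _ _ _ _ _ _ |}.


Arguments precomp X {p xi} hxi.

Definition nondeg (X : simplex) : Prop :=
  forall (i j : 'I_(sdim X).+1) (h : (i <= j)%N), (j : nat) = i.+1 ->
    sar X i j h <> idA (sob X i).

(* Morphisms X -> Y of Delta/C: order-preserving xi with Y o xi = X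
   (functor equality written out componentwise). *)
Record hom (X Y : simplex) := Hom {
  hmap : 'I_(sdim X).+1 -> 'I_(sdim Y).+1;
  hmono : mono hmap;
  hob : forall i, sob Y (hmap i) = sob X i;
  har : forall (i j : 'I_(sdim X).+1) (h : (i <= j)%N),
      sar Y (hmap i) (hmap j) (hmono i j h) = sar X i j h }.


Arguments Hom {X Y} hmap hmono hob har.
Arguments hmap {X Y} _ _.
Arguments hmono {X Y} _ _ _ _.
Arguments hob {X Y} _ _.
Arguments har {X Y} _ _ _ _.

Definition hid (X : simplex) : hom X X :=
  @Hom X X (fun i => i) (fun i j h => h) (fun i => erefl) (fun i j h => erefl).

(* diagrammatic composition: hcomp f g = g o f *)
Definition hcomp (X Y Z : simplex) (f : hom X Y) (g : hom Y Z) : hom X Z :=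
  @Hom X Z (fun i => hmap g (hmap f i))
    (fun i j h => hmono g _ _ (hmono f i j h))
    (fun i => etrans (hob g (hmap f i)) (hob f i))
    (fun i j h => etrans (har g _ _ (hmono f i j h)) (har f i j h)).


Arguments hcomp {X Y Z} f g.

(* ~ : smallest equivalence relation on morphisms of Delta/C, compatible with
   composition, containing the elementary equivalences d_* ~ d'_* : X -> X o s. *)
Inductive hequiv : forall X Y : simplex, hom X Y -> hom X Y -> Prop :=
  | he_elem (X : simplex) (s : 'I_(sdim X).+2 -> 'I_(sdim X).+1) (hs : mono s)
      (s_surj : forall k, exists l, s l = k)
      (d d' : hom X (precomp X hs)) :
      cancel (hmap d) s -> cancel (hmap d') s -> hequiv _ _ d d'
  | he_refl X Y (f : hom X Y) : hequiv _ _ f f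
  | he_sym X Y (f g : hom X Y) : hequiv _ _ f g -> hequiv _ _ g f
  | he_trans X Y (f g h : hom X Y) : hequiv _ _ f g -> hequiv _ _ g h -> hequiv _ _ f h
  | he_compl X Y Z (f f' : hom X Y) (g : hom Y Z) :
      hequiv _ _ f f' -> hequiv _ _ (hcomp f g) (hcomp f' g)
  | he_compr X Y Z (f : hom X Y) (g g' : hom Y Z) :
      hequiv _ _ g g' -> hequiv _ _ (hcomp f g) (hcomp f g').


End Nerve.

Arguments precomp {C} X {p xi} hxi.
Arguments Hom {C X Y} hmap hmono hob har.
Arguments hmap {C X Y} _ _.
Arguments hmono {C X Y} _ _ _ _.
Arguments hob {C X Y} _ _.
Arguments har {C X Y} _ _ _ _.
Arguments hid {C} X.
Arguments hcomp {C X Y Z} f g.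
Arguments hequiv {C X Y} _ _.
Arguments nondeg {C} X.

Arguments hom {C} X Y.
Arguments sdim {C} s.
Arguments sob {C} s _.
Arguments sar {C} s i j _.

(* Main.v *)
From Stdlib Require Import FunctionalExtensionality ProofIrrelevance.
Require Import Defs.
From mathcomp Require Import all_boot.
From mathcomp Require Import zify.

Lemma sar_eq (C : category) (Y : simplex C) a b a' b' pr pr' :
  a = a' -> b = b' -> sar Y a b pr = sar Y a' b' pr'.
Proof. move=> ea eb; subst; by rewrite (bool_irrelevance pr pr'). Qed.

Lemma strict (C : category) (X Y : simplex C) : nondeg X -> forall f : hom X Y,
  forall i j : 'I_(sdim X).+1, (i < j)%N -> (hmap f i < hmap f j)%N.
Proof.
move=> nd f i j lt_ij.
have hi1 : (i.+1 < (sdim X).+1)%N by apply: leq_ltn_trans lt_ij (ltn_ord j).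
pose i' := Ordinal hi1.
have hii' : (i <= i')%N by rewrite /= leqnSn.
have hi'j : (i' <= j)%N := lt_ij.
rewrite ltn_neqAle (hmono f i j (ltnW lt_ij)) andbT.
apply/negP => /eqP E.
have E' : hmap f i' = hmap f i.
  apply/val_inj/eqP; rewrite eqn_leq (hmono f _ _ hii') andbT.
  have := hmono f _ _ hi'j; by rewrite -E.
apply: (nd i i' hii' erefl).
rewrite -(har f i i' hii') -(hob f i).
rewrite -(sar_id C Y (hmap f i) (leqnn _)).
by apply: sar_eq.
Qed.

Lemma strict_inj (C : category) (X Y : simplex C) (f : hom X Y) :
  (forall i j : 'I_(sdim X).+1, (i < j)%N -> (hmap f i < hmap f j)%N) ->
  injective (hmap f).
Proof.
move=> sf i j E; apply/val_inj.
case: (ltngtP i j) => // h; have := sf _ _ h; by rewrite E ltnn.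
Qed.

Lemma strict_id n (h : 'I_n.+1 -> 'I_n.+1) :
  (forall i j : 'I_n.+1, (i < j)%N -> (h i < h j)%N) -> forall i, h i = i.
Proof.
move=> sh.
pose F k := nat_of_ord (h (inord k)).
have st : forall k, (k < n)%N -> (F k < F k.+1)%N.
  move=> k kn; apply: sh; rewrite !inordK //; lia.
have up : forall k, (k <= n)%N -> (k <= F k)%N.
  elim=> [|k IH] kn //; have := st k kn; have := IH (ltnW kn); lia.
have down : forall d, (d <= n)%N -> (F (n - d) + d <= n)%N.
  elim=> [|d IH] dn.
    rewrite subn0 addn0 /F; exact: (ltnSE (ltn_ord (h (inord n)))).
  have := IH (ltnW dn); have := st (n - d.+1) ltac:(lia).
  have -> : (n - d.+1).+1 = n - d by lia.
  lia.
move=> i; apply/val_inj/eqP.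
have := up i (ltnSE (ltn_ord i)); have := down (n - i) (leq_subr _ _).
have -> : n - (n - i) = i by have := ltn_ord i; lia.
rewrite /F inord_val => a b; apply/eqP; have := ltn_ord i; rewrite /=; lia.
Qed.

Lemma eqXY (C : category) (X Y : simplex C) (f : hom X Y) :
  (forall i j : 'I_(sdim X).+1, (i < j)%N -> (hmap f i < hmap f j)%N) ->
  sdim X = sdim Y -> X = Y /\ forall i, nat_of_ord (hmap f i) = i.
Proof.
destruct X as [p sX aX d1 c1 i1 m1], Y as [q sY aY d2 c2 i2 m2]; simpl in *.
move=> sf E; subst q.
have hf := @strict_id p _ sf.
split; last by move=> i; rewrite hf.
have es : sY = sX.
  apply: functional_extensionality => i; have := hob f i; rewrite /= hf; done.
subst sY.
have ea : aY = aX.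
  apply: functional_extensionality_dep => i.
  apply: functional_extensionality_dep => j.
  apply: functional_extensionality_dep => h.
  have := har f i j h; rewrite /= => <-.
  have gen : forall a b a' b' pr pr', a = a' -> b = b' -> aY a b pr = aY a' b' pr'.
    by move=> a b a' b' pr pr' ea eb; subst; rewrite (bool_irrelevance pr pr').
  by apply: gen; rewrite hf.
subst aY.
f_equal; apply: proof_irrelevance.
Qed.

Lemma f_id (C : category) (X : simplex C) (f : hom X X) :
  (forall i, nat_of_ord (hmap f i) = i) -> f = hid X.
Proof.
destruct f as [m mo ho ha]; simpl => hm.
have em : m = (fun i => i).
  apply: functional_extensionality => i; apply/val_inj; exact: hm.
subst m.
have emo : mo = (fun i j h => h) by apply: proof_irrelevance.
subst mo.
have eho : ho = (fun i => erefl) by apply: proof_irrelevance.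
subst ho.
have eha : ha = (fun i j h => erefl) by apply: proof_irrelevance.
by subst ha.
Qed.

Theorem corollary20 (C : category) (X Y : simplex C) (f : hom X Y) :
  nondeg X -> nondeg Y ->
  (exists g : hom Y X,
      hequiv (hcomp f g) (hid X) /\ hequiv (hcomp g f) (hid Y)) ->
  exists e : X = Y, hequiv f (eq_rect X (hom X) (hid X) Y e).
Proof.
move=> ndX ndY [g _].
have sf := @strict _ _ _ ndX f; have sg := @strict _ _ _ ndY g.
have dXY : sdim X = sdim Y.
  apply/eqP; rewrite eqn_leq.
  have := leq_card _ (@strict_inj _ _ _ f sf); have := leq_card _ (@strict_inj _ _ _ g sg).
  rewrite !card_ord !ltnS => -> ->; done.
have [e hv] := @eqXY _ _ _ f sf dXY.
subst Y; exists erefl; simpl.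
rewrite (@f_id _ _ f hv); exact: he_refl.
Qed.
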